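(* Let $g\ge2$, let $q_i(x,y)=a_ix^2+2b_ixy+c_iy^2$ ($i=1,\ldots,g$) be integer binary quadratic forms, irreducible over the integers, with $a_i\equiv1\pmod4$, and let $D:=\prod_{p\le2g}p\prod_{k}a_kc_k\delta_k\prod_{i<j}\operatorname{Res}(q_i,q_j)$, assumed nonzero. Then for every prime $p$ and all non-negative integers $e_1,\ldots,e_g$, $$\rho^*(p^{e_1},\ldots,p^{e_g})\ll p^{\max(e_1,\ldots,e_g)},$$ with implied constant depending only on the forms; and if $p\nmid D$ then $\rho^*(p^{e_1},\ldots,p^{e_g})=0$ whenever $e_i>0$ and $e_j>0$ for some $i\ne j$.
   Context: $\delta_k$ is the discriminant of $q_k$ and $\operatorname{Res}$ the resultant. For positive integers $d_1,\ldots,d_g$: $\Lambda_{\mathbf d}:=\{\mathbf x\in\mathbb Z^2:d_i\mid q_i(\mathbf x)\ \forall i\}$, $\Lambda^*_{\mathbf d}:=\{\mathbf x\in\Lambda_{\mathbf d}:\gcd(x_1,x_2,d_1\cdots d_g)=1\}$, and $\rho^*(\mathbf d):=\#(\Lambda^*_{\mathbf d}\cap[0,d_1\cdots d_g)^2)$. *)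

(* Defs.v *)
From HB Require Import structures.
From mathcomp Require Import all_boot all_order all_algebra.
From mathcomp Require Import mpoly.
Set Implicit Arguments. Unset Strict Implicit. Unset Printing Implicit Defensive.
Import Order.TTheory GRing.Theory Num.Theory.
Local Open Scope ring_scope.

Definition qform (a b c x y : int) : int := a * x ^+ 2 + 2 * b * x * y + c * y ^+ 2.

Definition qform_poly (a b c : int) : {mpoly int[2]} :=
  a%:MP * 'X_0 ^+ 2 + (2 * b)%:MP * 'X_0 * 'X_1 + c%:MP * 'X_1 ^+ 2.

Definition irreducible_Z (p : {mpoly int[2]}) : Prop :=
  p != 0 /\ p \isn't a GRing.unit /\
  forall f g : {mpoly int[2]}, p = f * g -> (f \is a GRing.unit) \/ (g \is a GRing.unit).

Definition qdisc (a b c : int) : int := (2 * b) ^+ 2 - 4 * a * c.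

(* Resultant of the binary forms a1 x^2 + B1 x y + c1 y^2 and
   a2 x^2 + B2 x y + c2 y^2 (B = 2b), i.e. the determinant of the
   Sylvester matrix: (a1c2-a2c1)^2 - (a1B2-a2B1)(B1c2-B2c1). *)
Definition qres (a1 b1 c1 a2 b2 c2 : int) : int :=
  let B1 := 2 * b1 in let B2 := 2 * b2 in
  (a1 * c2 - a2 * c1) ^+ 2 - (a1 * B2 - a2 * B1) * (B1 * c2 - B2 * c1).

Definition bigD (g : nat) (a b c : 'I_g -> int) : int :=
  (\prod_(p < (2 * g).+1 | prime p) p)%N%:Z
  * (\prod_(k < g) (a k * c k * qdisc (a k) (b k) (c k)))
  * (\prod_(i < g) \prod_(j < g | (i < j)%N)
        qres (a i) (b i) (c i) (a j) (b j) (c j)).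

Definition in_Lambda_star (g : nat) (a b c : 'I_g -> int) (d : 'I_g -> nat)
    (x1 x2 : int) : bool :=
  [forall i : 'I_g, ((d i)%:Z %| qform (a i) (b i) (c i) x1 x2)%Z]
  && (gcdz (gcdz x1 x2) (\prod_(i < g) d i)%N%:Z == 1).

Definition rho_star (g : nat) (a b c : 'I_g -> int) (d : 'I_g -> nat) : nat :=
  let N := (\prod_(i < g) d i)%N in
  #|[set x : 'I_N * 'I_N |
      in_Lambda_star a b c d (nat_of_ord x.1)%:Z (nat_of_ord x.2)%:Z]|.

(* Main.v *)
Require Import Defs.
From HB Require Import structures.
From mathcomp Require Import all_boot all_order all_algebra.
From mathcomp Require Import mpoly.
From mathcomp Require Import ring lra zify.
Import Order.TTheory GRing.Theory Num.Theory.
Local Open Scope ring_scope.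

Lemma split_pow (p M U W : nat) : prime p -> (p ^ M %| U * W)%N ->
  exists2 al, (al <= M)%N & (p ^ al %| U)%N && (p ^ (M - al) %| W)%N.
Proof.
move=> pp; elim: M U W => [|M IH] U W H.
  by exists 0%N => //; rewrite !expn0 !dvd1n.
have p0 : (0 < p)%N by apply: prime_gt0.
have : (p %| U * W)%N by apply: dvdn_trans H; rewrite dvdn_exp.
rewrite Euclid_dvdM // => /orP[] /dvdnP[k Ek]; subst.
- have H' : (p ^ M %| k * W)%N.
    by move: H; rewrite expnSr mulnAC dvdn_pmul2r.
  have [al alM /andP[h1 h2]] := IH _ _ H'.
  exists al.+1; first by [].
  by rewrite subSS h2 expnSr dvdn_mul.
- have H' : (p ^ M %| U * k)%N.
    by move: H; rewrite expnSr mulnA dvdn_pmul2r.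
  have [al alM /andP[h1 h2]] := IH _ _ H'.
  exists al; first by apply: leqW.
  by rewrite h1 subSn // expnSr dvdn_mul.
Qed.

Lemma PX (p k : nat) : ((p ^ k)%N)%:Z = (p%:Z) ^+ k.
Proof. by rewrite -natz natrX natz. Qed.

Lemma split_powz (p M : nat) (u w : int) : prime p -> ((p ^ M)%N%:Z %| u * w)%Z ->
  exists2 al, (al <= M)%N & ((p ^ al)%N%:Z %| u)%Z && ((p ^ (M - al))%N%:Z %| w)%Z.
Proof.
move=> pp; rewrite dvdzE abszM => /(split_pow _ _ _ _ pp)[al alM H].
by exists al; rewrite // !dvdzE.
Qed.

Lemma PP_dvd (p k l : nat) : (k <= l)%N -> ((p ^ k)%N%:Z %| (p ^ l)%N%:Z)%Z.
Proof. by move=> kl; rewrite dvdzE /= dvdn_exp2l. Qed.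

Lemma PPD (p k l : nat) : ((p ^ (k + l))%N%:Z) = (p ^ k)%N%:Z * (p ^ l)%N%:Z.
Proof. by rewrite expnD PoszM. Qed.

Lemma key (p M : nat) (a B c x x0 y : int) : prime p -> ~~ (p %| `|y|)%N ->
  ((p ^ M)%N%:Z %| a * x ^+ 2 + B * x * y + c * y ^+ 2)%Z ->
  ((p ^ M)%N%:Z %| a * x0 ^+ 2 + B * x0 * y + c * y ^+ 2)%Z ->
  ((p ^ M)%N%:Z %| (B ^+ 2 - 4 * a * c) * x + (- ((B ^+ 2 - 4 * a * c) * x0)))%Z \/
  ((p ^ M)%N%:Z %| ((B ^+ 2 - 4 * a * c) * a) * x + (B ^+ 2 - 4 * a * c) * (a * x0 + B * y))%Z.
Proof.
move=> pp py h1 h2.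
set D := B ^+ 2 - 4 * a * c.
have huw : ((p ^ M)%N%:Z %| (x - x0) * (a * (x + x0) + B * y))%Z.
  have -> : (x - x0) * (a * (x + x0) + B * y) =
     (a * x ^+ 2 + B * x * y + c * y ^+ 2) - (a * x0 ^+ 2 + B * x0 * y + c * y ^+ 2) by ring.
  by rewrite rpredB.
have [al alM /andP[hu hw]] := split_powz _ _ _ _ pp huw.
set m := minn al (M - al).
have hm1 : ((p ^ m)%N%:Z %| x - x0)%Z.
  by apply: dvdz_trans hu; apply: PP_dvd; apply: geq_minl.
have hm2 : ((p ^ m)%N%:Z %| a * (x + x0) + B * y)%Z.
  by apply: dvdz_trans hw; apply: PP_dvd; apply: geq_minr.
have hz : ((p ^ m)%N%:Z %| 2 * a * x0 + B * y)%Z.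
  have -> : 2 * a * x0 + B * y = (a * (x + x0) + B * y) - a * (x - x0) by ring.
  by rewrite rpredB // dvdz_mull.
have hmm : (m + m <= M)%N.
  have := geq_minl al (M - al); have := geq_minr al (M - al); rewrite -/m.
  move=> h3 h4; apply: leq_trans (leq_add h4 h3) _; by rewrite subnKC.
have hz2 : ((p ^ (m + m))%N%:Z %| D * y ^+ 2)%Z.
  have -> : D * y ^+ 2 = (2 * a * x0 + B * y) ^+ 2 - 4 * a * (a * x0 ^+ 2 + B * x0 * y + c * y ^+ 2)
    by rewrite /D; ring.
  rewrite rpredB //; first by rewrite PPD expr2 dvdz_mul.
  by apply: dvdz_mull; apply: dvdz_trans h2; apply: PP_dvd.
have hD : ((p ^ (m + m))%N%:Z %| D)%Z.
  move: hz2; rewrite Gauss_dvdzl // coprimezE /= abszX.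
  by apply: coprimeXl; apply: coprimeXr; rewrite prime_coprime.
have hDm : ((p ^ m)%N%:Z %| D)%Z.
  by apply: dvdz_trans hD; apply: PP_dvd; apply: leq_addr.
case: (leqP al (M - al)) => hal.
- right.
  have -> : D * a * x + D * (a * x0 + B * y) = (a * (x + x0) + B * y) * D by ring.
  have -> : M = ((M - al) + al)%N by rewrite subnK.
  rewrite PPD; apply: dvdz_mul => //.
  by move: hDm; rewrite /m (minn_idPl hal).
- left.
  have -> : D * x + - (D * x0) = (x - x0) * D by ring.
  have -> : M = (al + (M - al))%N by rewrite subnKC.
  rewrite PPD; apply: dvdz_mul => //.
  by move: hDm; rewrite /m (minn_idPr (ltnW hal)).
Qed.

Lemma cnt_res (N Q r : nat) : (0 < Q)%N -> (Q %| N)%N ->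
  (count (fun x => x %% Q == r) (iota 0 N) <= N %/ Q)%N.
Proof.
move=> Q0 QN.
rewrite -size_filter.
set s := filter _ _.
have us : uniq s by rewrite filter_uniq // iota_uniq.
rewrite -(size_map (divn^~ Q)) -(size_iota 0 (N %/ Q)).
apply: uniq_leq_size.
  rewrite map_inj_in_uniq // => x y; rewrite !mem_filter => /andP[/eqP hx _] /andP[/eqP hy _] e.
  by rewrite (divn_eq x Q) (divn_eq y Q) e hx hy.
move=> z /mapP[x]; rewrite mem_filter mem_iota => /andP[_ /andP[_ xN]] ->.
rewrite mem_iota /= ltn_divLR // divnK //.
Qed.

Lemma sum_count (N : nat) (b : pred nat) :
  (\sum_(x < N) (b x : nat) = count b (iota 0 N))%N.
Proof.
rewrite -(big_mkord xpredT (fun x => (b x : nat))) /index_iota subn0.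
rewrite -sum1_count.
rewrite [RHS]big_mkcond /=; by apply: eq_bigr => i _; case: (b i).
Qed.

Lemma cnt_lin (N P : nat) (K L : int) : K != 0 -> (0 < P)%N -> (P %| N)%N ->
  (\sum_(x < N) ((P%:Z %| (K * x%:Z + L)%R)%Z : nat) <= `|K| * (N %/ P))%N.
Proof.
move=> K0 P0 PN.
case: (boolP [exists x : 'I_N, (P%:Z %| K * (nat_of_ord x)%:Z + L)%Z]) => [/existsP[x1 hx1] | /existsPn hno]; last first.
  by rewrite big1 // => x _; rewrite (negbTE (hno x)).
set G := gcdn `|K| P.
set Q := (P %/ G)%N.
have G0 : (0 < G)%N by rewrite gcdn_gt0 P0 orbT.
have GP : (G %| P)%N by apply: dvdn_gcdr.
have PQG : P = (Q * G)%N by rewrite divnK.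
have Q0 : (0 < Q)%N by move: P0; rewrite PQG muln_gt0 => /andP[].
have hQ : forall x : 'I_N, (P%:Z %| K * (nat_of_ord x)%:Z + L)%Z -> (x %% Q == x1 %% Q)%N.
  move=> x hx.
  have h : (P%:Z %| K * ((nat_of_ord x)%:Z - (nat_of_ord x1)%:Z))%Z.
    have -> : K * ((nat_of_ord x)%:Z - (nat_of_ord x1)%:Z) =
       (K * (nat_of_ord x)%:Z + L) - (K * (nat_of_ord x1)%:Z + L) by ring.
    by rewrite rpredB.
  move: h; rewrite dvdzE abszM /= => h.
  set v := `|(nat_of_ord x)%:Z - (nat_of_ord x1)%:Z|%N in h.
  have h2 : (P %| G * v)%N.
    by rewrite /G muln_gcdl dvdn_gcd h dvdn_mulr.
  have h3 : (Q %| v)%N by move: h2; rewrite PQG mulnC dvdn_pmul2l.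
  have h4 : (Q%:Z %| (nat_of_ord x)%:Z - (nat_of_ord x1)%:Z)%Z by rewrite dvdzE.
  move: h4; rewrite -eqz_mod_dvd !modz_nat => /eqP [->]; by [].
apply: (@leq_trans (\sum_(x < N) ((x %% Q == x1 %% Q)%N : nat))).
  apply: leq_sum => x _; case: (boolP (P%:Z %| _)%Z) => // hx.
  by rewrite (hQ x hx).
rewrite (sum_count N (fun x => x %% Q == x1 %% Q)%N).
apply: leq_trans (cnt_res _ _ _ Q0 _) _.
  by apply: dvdn_trans PN; rewrite PQG dvdn_mulr.
have EN : N = ((N %/ P) * G * Q)%N by rewrite -mulnA (mulnC G) -PQG divnK.
have -> : (N %/ Q = (N %/ P) * G)%N by rewrite {1}EN mulnK.
rewrite [X in (_ <= X)%N]mulnC leq_mul2l dvdn_leq ?orbT //.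
  by rewrite absz_gt0.
by apply: dvdn_gcdl.
Qed.

Lemma cnt_y (p M N : nat) (a B c y : int) : prime p -> ~~ (p %| `|y|)%N -> a != 0 ->
  B ^+ 2 - 4 * a * c != 0 -> (p ^ M %| N)%N ->
  (\sum_(x < N) (((p ^ M)%N%:Z %| (a * x%:Z ^+ 2 + B * x%:Z * y + c * y ^+ 2)%R)%Z : nat)
    <= (`|(B ^+ 2 - 4 * a * c)%R| + `|((B ^+ 2 - 4 * a * c) * a)%R|) * (N %/ p ^ M))%N.
Proof.
move=> pp py a0 D0 PN.
have P0 : (0 < p ^ M)%N by rewrite expn_gt0 prime_gt0.
case: (boolP [exists x : 'I_N, ((p ^ M)%N%:Z %| (a * (nat_of_ord x)%:Z ^+ 2 + B * (nat_of_ord x)%:Z * y + c * y ^+ 2)%R)%Z])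
  => [/existsP[x0 hx0] | /existsPn hno]; last first.
  by rewrite big1 // => x _; rewrite (negbTE (hno x)).
set D := B ^+ 2 - 4 * a * c.
apply: (@leq_trans (\sum_(x < N) ((((p ^ M)%N%:Z %| (D * x%:Z + (- (D * (nat_of_ord x0)%:Z)))%R)%Z : nat)
   + (((p ^ M)%N%:Z %| ((D * a) * x%:Z + D * (a * (nat_of_ord x0)%:Z + B * y))%R)%Z : nat)))).
  apply: leq_sum => x _.
  case: (boolP (_ %| _)%Z) => // hx.
  have [h|h] := key _ _ _ _ _ _ _ _ pp py hx hx0.
    by rewrite -/D in h; rewrite h.
  by rewrite -/D in h; rewrite h addn1.
rewrite big_split /= mulnDl leq_add //; apply: cnt_lin => //.
by rewrite mulf_neq0.
Qed.

Lemma cnt_form (p M N : nat) (a B c : int) : prime p -> a != 0 -> c != 0 ->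
  B ^+ 2 - 4 * a * c != 0 -> (p ^ M %| N)%N ->
  (\sum_(x < N) \sum_(y < N) ((~~ (p %| x)%N || ~~ (p %| y)%N) &&
      ((p ^ M)%N%:Z %| (a * x%:Z ^+ 2 + B * x%:Z * y%:Z + c * y%:Z ^+ 2)%R)%Z : nat)
   <= N * (((`|(B ^+ 2 - 4 * a * c)%R| + `|((B ^+ 2 - 4 * a * c) * a)%R|) +
            (`|(B ^+ 2 - 4 * a * c)%R| + `|((B ^+ 2 - 4 * a * c) * c)%R|)) * (N %/ p ^ M)))%N.
Proof.
move=> pp a0 c0 D0 PN.
set T := (N %/ p ^ M)%N.
set D := B ^+ 2 - 4 * a * c.
apply: (@leq_trans (\sum_(x < N) \sum_(y < N)
   ((~~ (p %| y)%N && ((p ^ M)%N%:Z %| (a * x%:Z ^+ 2 + B * x%:Z * y%:Z + c * y%:Z ^+ 2)%R)%Z : nat) +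
    (~~ (p %| x)%N && ((p ^ M)%N%:Z %| (c * y%:Z ^+ 2 + B * y%:Z * x%:Z + a * x%:Z ^+ 2)%R)%Z : nat)))).
  apply: leq_sum => x _; apply: leq_sum => y _.
  have -> : c * (nat_of_ord y)%:Z ^+ 2 + B * (nat_of_ord y)%:Z * (nat_of_ord x)%:Z + a * (nat_of_ord x)%:Z ^+ 2
     = a * (nat_of_ord x)%:Z ^+ 2 + B * (nat_of_ord x)%:Z * (nat_of_ord y)%:Z + c * (nat_of_ord y)%:Z ^+ 2 by ring.
  by case: (p %| x)%N; case: (p %| y)%N; case: (_ %| _)%Z.
rewrite mulnDl mulnDr.
rewrite (eq_bigr (fun x : 'I_N => \sum_(y < N) (~~ (p %| y)%N && ((p ^ M)%N%:Z %| (a * (nat_of_ord x)%:Z ^+ 2 + B * (nat_of_ord x)%:Z * (nat_of_ord y)%:Z + c * (nat_of_ord y)%:Z ^+ 2)%R)%Z : nat) +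
   \sum_(y < N) (~~ (p %| x)%N && ((p ^ M)%N%:Z %| (c * (nat_of_ord y)%:Z ^+ 2 + B * (nat_of_ord y)%:Z * (nat_of_ord x)%:Z + a * (nat_of_ord x)%:Z ^+ 2)%R)%Z : nat)));
  last by move=> x _; rewrite big_split.
rewrite big_split /= leq_add //.
  rewrite exchange_big /=.
  rewrite -[X in (_ <= X * _)%N]card_ord -sum_nat_const.
  apply: leq_sum => y _.
  case: (boolP (p %| y)%N) => py.
    by rewrite big1.
  by apply: cnt_y.
rewrite -[X in (_ <= X * _)%N]card_ord -sum_nat_const.
apply: leq_sum => x _.
case: (boolP (p %| x)%N) => px.
  by rewrite big1.
have -> : D = B ^+ 2 - 4 * c * a by rewrite /D; ring.
apply: cnt_y => //.
by rewrite mulrAC.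
Qed.

Lemma res_dvd (p k : nat) (a1 b1 c1 a2 b2 c2 x y : int) : prime p ->
  ~~ ((p %| `|x|)%N && (p %| `|y|)%N) ->
  ((p ^ k)%N%:Z %| qform a1 b1 c1 x y)%Z -> ((p ^ k)%N%:Z %| qform a2 b2 c2 x y)%Z ->
  ((p ^ k)%N%:Z %| qres a1 b1 c1 a2 b2 c2)%Z.
Proof.
move=> pp hxy h1 h2.
set R := qres a1 b1 c1 a2 b2 c2.
set B1 := 2 * b1; set B2 := 2 * b2.
have hy : ((p ^ k)%N%:Z %| R * y ^+ 3)%Z.
  set m := a1 * B2 - a2 * B1; set q := a1 * c2 - a2 * c1.
  have -> : R * y ^+ 3 = (a2 * m * x + (m * B2 - a2 * q) * y) * qform a1 b1 c1 x y
       + (- (a1 * m) * x + (a1 * q - B1 * m) * y) * qform a2 b2 c2 x y.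
    by rewrite /R /qres /qform /m /q /B1 /B2; ring.
  by rewrite rpredD // dvdz_mull.
have hx : ((p ^ k)%N%:Z %| R * x ^+ 3)%Z.
  set m := c1 * B2 - c2 * B1; set q := c1 * a2 - c2 * a1.
  have -> : R * x ^+ 3 = (c2 * m * y + (m * B2 - c2 * q) * x) * qform a1 b1 c1 x y
       + (- (c1 * m) * y + (c1 * q - B1 * m) * x) * qform a2 b2 c2 x y.
    by rewrite /R /qres /qform /m /q /B1 /B2; ring.
  by rewrite rpredD // dvdz_mull.
case/nandP: hxy => h.
  move: hx; rewrite Gauss_dvdzl // coprimezE /= abszX.
  by apply: coprimeXl; apply: coprimeXr; rewrite prime_coprime.
move: hy; rewrite Gauss_dvdzl // coprimezE /= abszX.
by apply: coprimeXl; apply: coprimeXr; rewrite prime_coprime.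
Qed.

Lemma qres_sym a1 b1 c1 a2 b2 c2 : qres a1 b1 c1 a2 b2 c2 = qres a2 b2 c2 a1 b1 c1.
Proof. rewrite /qres /=; ring. Qed.
Lemma dvd_nz (x y : int) : (x %| y)%Z -> y != 0 -> x != 0.
Proof.
move=> h; apply: contraNneq => x0; move: h; rewrite x0 dvdzE /= dvd0n absz_eq0.
by [].
Qed.

Lemma dvd_bigD_k (g : nat) (a b c : 'I_g -> int) k :
  (a k * c k * qdisc (a k) (b k) (c k) %| bigD a b c)%Z.
Proof.
rewrite /bigD; apply: dvdz_mulr; apply: dvdz_mull.
by rewrite (bigD1 k) //= dvdz_mulr.
Qed.

Lemma dvd_bigD_res (g : nat) (a b c : 'I_g -> int) (i j : 'I_g) : (i < j)%N ->
  (qres (a i) (b i) (c i) (a j) (b j) (c j) %| bigD a b c)%Z.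
Proof.
move=> ij; rewrite /bigD; apply: dvdz_mull.
rewrite (bigD1 i) //=; apply: dvdz_mulr.
by rewrite (bigD1 j) //= dvdz_mulr.
Qed.

Lemma prim (g : nat) (a b c : 'I_g -> int) (p : nat) (e : 'I_g -> nat) (i : 'I_g) (x1 x2 : nat) :
  prime p -> (0 < e i)%N -> in_Lambda_star a b c (fun i => (p ^ e i)%N) x1%:Z x2%:Z ->
  ~~ ((p %| `|x1%:Z|)%N && (p %| `|x2%:Z|)%N).
Proof.
move=> pp ei /andP[_ /eqP hg]; apply/negP => /andP[h1 h2].
have pN : (p %| \prod_(i0 < g) p ^ e i0)%N.
  rewrite (bigD1 i) //=; apply: dvdn_mulr; by rewrite dvdn_exp.
have : (p%:Z %| gcdz (gcdz x1%:Z x2%:Z) (\prod_(i0 < g) p ^ e i0)%N%:Z)%Z.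
  by rewrite !dvdz_gcd !dvdzE /= h1 h2 pN.
by rewrite hg dvdzE /= dvdn1 => /eqP p1; move: pp; rewrite p1.
Qed.

Lemma card_sum (T : finType) (P : pred T) : #|[set x | P x]| = (\sum_(x : T) (P x : nat))%N.
Proof. by rewrite -sum1dep_card big_mkcond /=; apply: eq_bigr => x _; case: (P x). Qed.

Theorem lemma2p3 (g : nat) (a b c : 'I_g -> int)
  (hg : (2 <= g)%N)
  (hirr : forall i, irreducible_Z (qform_poly (a i) (b i) (c i)))
  (ha : forall i, (a i = 1 %[mod 4])%Z)
  (hD : bigD a b c != 0) :
  (exists C : nat, forall (p : nat) (e : 'I_g -> nat), prime p ->
     (rho_star a b c (fun i => (p ^ e i)%N) <= C * p ^ (\max_(i < g) e i))%N)
  /\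
  (forall (p : nat) (e : 'I_g -> nat), prime p ->
     ~~ (p%:Z %| bigD a b c)%Z ->
     (exists i j : 'I_g, [/\ i != j, (0 < e i)%N & (0 < e j)%N]) ->
     rho_star a b c (fun i => (p ^ e i)%N) = 0%N).
Proof.
have hk k : [/\ a k != 0, c k != 0 & qdisc (a k) (b k) (c k) != 0].
  have := dvd_nz _ _ (dvd_bigD_k _ a b c k) hD.
  by rewrite !mulf_eq0 !negb_or => /andP[/andP[-> ->] ->].
have hres (i j : 'I_g) : i != j -> qres (a i) (b i) (c i) (a j) (b j) (c j) != 0.
  move=> ij; case: (ltngtP i j) => [lt|gt|/val_inj eq]; last by rewrite eq eqxx in ij.
    exact: dvd_nz _ _ (dvd_bigD_res _ a b c _ _ lt) hD.
  by rewrite qres_sym; exact: dvd_nz _ _ (dvd_bigD_res _ a b c _ _ gt) hD.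
split.
  pose Kf k := ((`|(qdisc (a k) (b k) (c k))%R| + `|(qdisc (a k) (b k) (c k) * a k)%R|) +
                (`|(qdisc (a k) (b k) (c k))%R| + `|(qdisc (a k) (b k) (c k) * c k)%R|))%N.
  pose Rf k := (\prod_(j < g | j != k) `|(qres (a k) (b k) (c k) (a j) (b j) (c j))%R|)%N.
  exists (\sum_(k < g) Kf k * (Rf k * Rf k)).+1%N => p e pp.
  set M := \max_(i < g) e i.
  have [i0 Mi0] : {i0 : 'I_g | M = e i0} by apply: bigop.eq_bigmax; rewrite card_ord; apply: leq_trans hg.
  rewrite /rho_star /=.
  set N := (\prod_(i < g) p ^ e i)%N.
  case: (posnP M) => [M0|Mpos].
    have N1 : N = 1%N.
      rewrite /N big1 // => i _.
      by have := @leq_bigmax _ e i; rewrite -/M M0 leqn0 => /eqP ->.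
    apply: leq_trans (max_card _) _.
    by rewrite card_prod card_ord N1 M0 expn0 muln1.
  set S := [set _ | _].
  case: (posnP #|S|) => [->|Spos]; first by [].
  have /card_gt0P [[w1 w2]] := Spos; rewrite inE /= => hw.
  have ei0 : (0 < e i0)%N by rewrite -Mi0.
  have hprim := prim _ a b c p e i0 w1 w2 pp ei0 hw.
  move: (hw) => /andP[/forallP hdv _].
  set T := (\prod_(j < g | j != i0) p ^ e j)%N.
  have NT : N = (p ^ M * T)%N by rewrite /N (bigD1 i0) //= Mi0.
  have TR : (T <= Rf i0)%N.
    apply: leq_prod => j ji0.
    have ejM : (e j <= e i0)%N by rewrite -Mi0; apply: leq_bigmax.
    have h := res_dvd p (e j) _ _ _ _ _ _ _ _ pp hprim
       (dvdz_trans (PP_dvd p _ _ ejM) (hdv i0)) (hdv j).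
    apply: dvdn_leq; first by rewrite absz_gt0 hres // eq_sym.
    by move: h; rewrite dvdzE.
  have PM0 : (0 < p ^ M)%N by rewrite expn_gt0 prime_gt0.
  apply: (@leq_trans (\sum_(x < N) \sum_(y < N) ((~~ (p %| x)%N || ~~ (p %| y)%N) &&
      ((p ^ M)%N%:Z %| (a i0 * x%:Z ^+ 2 + 2 * b i0 * x%:Z * y%:Z + c i0 * y%:Z ^+ 2)%R)%Z : nat))).
    rewrite card_sum pair_big /=.
    apply: leq_sum => [[x y]] _ /=.
    case: (boolP (in_Lambda_star _ _ _ _ _ _)) => // h.
    have := prim _ a b c p e i0 x y pp ei0 h.
    move: h => /andP[/forallP hd _].
    have := hd i0; rewrite -Mi0 /qform /= => -> .
    by rewrite negb_and andbT => ->.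
  have [ha0 hc0 hd0] := hk i0.
  apply: leq_trans (cnt_form p M N (a i0) (2 * b i0) (c i0) pp ha0 hc0 hd0 _) _.
    by rewrite NT dvdn_mulr.
  rewrite -/(qdisc (a i0) (b i0) (c i0)) -/(Kf i0) NT mulKn //.
  apply: (@leq_trans (Kf i0 * (Rf i0 * Rf i0) * p ^ M)).
    have -> : (p ^ M * T * (Kf i0 * T) = Kf i0 * (T * T) * p ^ M)%N by ring.
    by rewrite leq_mul2r leq_mul2l leq_mul ?orbT.
  rewrite leq_mul2r; apply/orP; right; apply: leqW.
  by rewrite (bigD1 i0) //= leq_addr.
move=> p e pp hnd [i [j [ij ei ej]]].
rewrite /rho_star /=.
apply/eqP; rewrite -leqn0 leqNgt; apply/negP => Spos.
have /card_gt0P [[w1 w2]] := Spos; rewrite inE /= => hw.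
have hprim := prim _ a b c p e i w1 w2 pp ei hw.
move: (hw) => /andP[/forallP hdv _].
have h := res_dvd p 1 _ _ _ _ _ _ _ _ pp hprim
   (dvdz_trans (PP_dvd p _ _ ei) (hdv i)) (dvdz_trans (PP_dvd p _ _ ej) (hdv j)).
rewrite expn1 in h.
case: (ltngtP i j) => [lt|gt|/val_inj eq]; last by rewrite eq eqxx in ij.
  by move: hnd; rewrite (dvdz_trans h (dvd_bigD_res _ a b c _ _ lt)).
rewrite qres_sym in h.
by move: hnd; rewrite (dvdz_trans h (dvd_bigD_res _ a b c _ _ gt)).
Qed.
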